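(* Let $X$ and $Y$ be real Banach spaces with $Y$ a dual Banach space, let $\mathcal{M}:\ell^{\infty}(X,Y)\to Y$ be a generalized invariant mean, and let $P_X^Y:Lip_0(X,Y)\to L(X,Y)$ be defined by $P_X^Y(f)(z)=\mathcal{M}(\phi_f(z))$ for $f\in Lip_0(X,Y)$, $z\in X$, where $\phi_f(z)\in\ell^\infty(X,Y)$ is the map $x\mapsto f(z+x)-f(x)$. Then $Lip_0(X,Y)$ is topologically isomorphic to $L(X,Y)\oplus_1\ker(P_X^Y)$, via $f\mapsto (P_X^Y(f), f-P_X^Y(f))$.
   Context: $Lip_0(X,Y)$ is the Banach space of Lipschitz maps $f:X\to Y$ with $f(0)=0$ and norm $Lip(f)=\sup_{x\neq y}\|f(x)-f(y)\|/\|x-y\|$; $L(X,Y)$ is the space of bounded linear operators with the operator norm, a closed subspace of $Lip_0(X,Y)$. $\ell^\infty(X,Y)$ is the Banach space of bounded maps $X\to Y$ with the sup norm. A generalized invariant mean is a norm-one linear operator $\mathcal{M}:\ell^\infty(X,Y)\to Y$ such that $\mathcal{M}(g_x)=\mathcal{M}(g)$ for all $g\in\ell^\infty(X,Y)$, $x\in X$, where $g_x(z)=g(x+z)$, and $\mathcal{M}(\hat y)=y$ for every $y\in Y$, where $\hat y$ is the constant map with value $y$ (such an operator exists when $Y$ is a dual space). With these, $P_X^Y$ is a well-defined map into $L(X,Y)$. The space $L(X,Y)\oplus_1\ker(P_X^Y)$ carries the norm $\|(T,g)\|=\|T\|+Lip(g)$. *)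

(* Defs.v *)
From HB Require Import structures.
From mathcomp Require Import all_boot all_order all_algebra.
From mathcomp Require Import all_classical all_reals all_analysis.
Set Implicit Arguments. Unset Strict Implicit. Unset Printing Implicit Defensive.
Import Order.TTheory GRing.Theory Num.Theory.
Import numFieldNormedType.Exports.
Local Open Scope classical_set_scope.
Local Open Scope ring_scope.

Section Defs.
Variable R : realType.

Definition lin_map (U V : lmodType R) (T : U -> V) : Prop :=
  forall (a : R) (u v : U), T (a *: u + v) = a *: T u + T v.

Definition is_lip0 (X Y : normedModType R) (f : X -> Y) : Prop :=
  f 0 = 0 /\ exists k : R, forall x y : X, `|f x - f y| <= k * `|x - y|.

Definition lipn (X Y : normedModType R) (f : X -> Y) : R :=
  sup [set r | exists x y : X, x != y /\ r = `|f x - f y| / `|x - y|].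

Definition is_bdd_lin (X Y : normedModType R) (T : X -> Y) : Prop :=
  lin_map T /\ exists k : R, forall x : X, `|T x| <= k * `|x|.

Definition opn (X Y : normedModType R) (T : X -> Y) : R :=
  sup [set r | exists x : X, `|x| <= 1 /\ r = `|T x|].

Definition is_bdd (X Y : normedModType R) (g : X -> Y) : Prop :=
  exists k : R, forall x : X, `|g x| <= k.

Definition supn (X Y : normedModType R) (g : X -> Y) : R :=
  sup [set r | exists x : X, r = `|g x|].

(* Y is a dual Banach space: Y is linearly isometric (via J) onto the space
   of bounded linear functionals on some normed space Z, normed by the
   operator norm. *)
Definition is_dual_space (Y : normedModType R) : Prop :=
  exists (Z : normedModType R) (J : Y -> Z -> R),
    [/\ forall y, is_bdd_lin (J y : Z -> R^o),
        forall (a : R) (y1 y2 : Y), J (a *: y1 + y2) = fun z => a * J y1 z + J y2 z,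
        forall phi : Z -> R^o, is_bdd_lin phi -> exists y, J y = phi
      & forall y, `|y| = opn (J y : Z -> R^o)].

(* generalized invariant mean M : l^oo(X,Y) -> Y (M is given on all maps,
   only its values on bounded maps matter) *)
Definition gen_inv_mean (X Y : normedModType R) (M : (X -> Y) -> Y) : Prop :=
  [/\ (forall (a : R) (g h : X -> Y), is_bdd g -> is_bdd h ->
         M (fun z => a *: g z + h z) = a *: M g + M h),
      (forall g, is_bdd g -> `|M g| <= supn g),
      sup [set r | exists g : X -> Y, [/\ is_bdd g, supn g <= 1 & r = `|M g|]] = 1,
      (forall (g : X -> Y) (x : X), is_bdd g -> M (fun z => g (x + z)) = M g)
    & forall y : Y, M (fun _ => y) = y].

Definition PXY (X Y : normedModType R) (M : (X -> Y) -> Y) (f : X -> Y) : X -> Y :=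
  fun z => M (fun x => f (z + x) - f x).

End Defs.

(* Main.v *)
Require Import Defs.
From HB Require Import structures.
From mathcomp Require Import all_boot all_order all_algebra.
From mathcomp Require Import all_classical all_reals all_analysis.
From mathcomp Require Import lra.
Import Order.TTheory GRing.Theory Num.Theory.
Import numFieldNormedType.Exports.
Local Open Scope classical_set_scope.
Local Open Scope ring_scope.
Set Implicit Arguments. Unset Strict Implicit.

Section Helpers.
Variable R : realType.

Lemma sup_le_b (S : set R) (b : R) : 0 <= b -> (forall r, S r -> r <= b) -> sup S <= b.
Proof.
move=> b0 Hb; have [[r Sr]|] := pselect (S !=set0).
  by apply: ge_sup; [exists r | exact: Hb].
by move=> /set0P/negP; rewrite negbK => /eqP ->; rewrite sup0.
Qed.

Lemma le_sup_b (S : set R) (b r : R) : (forall r, S r -> r <= b) -> S r -> r <= sup S.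
Proof. by move=> Hb Sr; apply: sup_upper_bound => //; split; [exists r|exists b]. Qed.

Lemma sup_ge0 (S : set R) : (forall r, S r -> 0 <= r) -> 0 <= sup S.
Proof.
move=> H; have [hs|nhs] := pselect (has_sup S); last by rewrite sup_out.
case: (hs) => [[r Sr] _]; apply: le_trans (H _ Sr) _; exact: sup_upper_bound.
Qed.

Variables X Y : normedModType R.

Lemma lipn_ge0 (f : X -> Y) : 0 <= lipn f.
Proof. by apply: sup_ge0 => r [x [y [_ ->]]]; rewrite divr_ge0. Qed.

Lemma lipn_bound (f : X -> Y) : is_lip0 f -> forall x y, `|f x - f y| <= lipn f * `|x - y|.
Proof.
case=> _ [k Hk] x y; have [->|xy] := eqVneq x y.
  by rewrite !subrr !normr0 mulr0.
have ny : 0 < `|x - y| by rewrite normr_gt0 subr_eq0.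
rewrite -ler_pdivrMr //; apply: (@le_sup_b _ k).
  by move=> r [a [b [ab ->]]]; rewrite ler_pdivrMr ?normr_gt0 ?subr_eq0.
by exists x, y.
Qed.

Lemma lipn_le (f : X -> Y) b : 0 <= b -> (forall x y, `|f x - f y| <= b * `|x - y|) -> lipn f <= b.
Proof.
move=> b0 H; apply: sup_le_b => // r [x [y [xy ->]]].
by rewrite ler_pdivrMr ?normr_gt0 ?subr_eq0.
Qed.

Lemma opn_le (T : X -> Y) b : (forall x, `|x| <= 1 -> `|T x| <= b) -> opn T <= b.
Proof.
move=> H; apply: ge_sup; first by exists `|T 0|, 0; rewrite normr0.
by move=> r [x [x1 ->]]; exact: H.
Qed.

Lemma lin0 (T : X -> Y) : lin_map T -> T 0 = 0.
Proof.
move=> HT; have h := HT 1 0 0; rewrite !scale1r addr0 in h.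
by apply: (addrI (T 0)); rewrite addr0 -h.
Qed.

Lemma linB (T : X -> Y) : lin_map T -> forall x y, T (x - y) = T x - T y.
Proof.
move=> HT x y; have := HT (-1) y x; rewrite !scaleN1r addrC => ->.
by rewrite addrC.
Qed.

Lemma opn_bound (T : X -> Y) : is_bdd_lin T -> forall x, `|T x| <= opn T * `|x|.
Proof.
case=> HT [k Hk] x; have [->|x0] := eqVneq x 0.
  by rewrite lin0 // !normr0 mulr0.
have nx : 0 < `|x| by rewrite normr_gt0.
rewrite -ler_pdivrMr //; apply: (@le_sup_b _ (Num.max k 0)).
  move=> r [u [u1 ->]]; apply: le_trans (Hk u) _.
  have [k0|k0] := leP 0 k.
    by apply: (le_trans (ler_wpM2l k0 u1)); rewrite mulr1.
  by rewrite nmulr_rle0 // normr_ge0.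
exists (`|x|^-1 *: x); split.
  by rewrite normfZV.
have := HT (`|x|^-1) x 0; rewrite !addr0 => ->.
rewrite lin0 // addr0.
by rewrite normrZ ger0_norm ?invr_ge0 // mulrC.
Qed.

Lemma add_bdd_lin (T : X -> Y) L :
  (forall x y, T (x + y) = T x + T y) -> (forall x, `|T x| <= L * `|x|) -> lin_map T.
Proof.
move=> TD TB.
have T0 : T 0 = 0.
  by apply: (addrI (T 0)); rewrite -TD !addr0.
have TN x : T (- x) = - T x.
  by apply: (addrI (T x)); rewrite -TD !subrr.
have Tn x n : T (x *+ n) = T x *+ n.
  by elim: n => [|n IH]; rewrite ?mulr0n // !mulrS TD IH.
have Tz x (m : int) : T (m%:~R *: x) = m%:~R *: T x.
  rewrite !scaler_int; case: m => n.
    exact: Tn.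
  by rewrite NegzE !mulrNz TN; congr (- _); exact: Tn.
move=> a u v; rewrite TD; congr (_ + _).
set D := fun b => T (b *: u) - b *: T u.
have DD b c : D (b + c) = D b + D c.
  by rewrite /D scalerDl TD scalerDl opprD addrACA.
have Dz (m : int) : D m%:~R = 0 by rewrite /D Tz subrr.
set K := L * `|u| + `|T u|.
have DB b : `|D b| <= K * `|b|.
  rewrite /D /K mulrDl; apply: (le_trans (ler_normB _ _)); apply: lerD.
    by rewrite (le_trans (TB _)) // normrZ mulrCA mulrC.
  by rewrite normrZ mulrC.
have Dn b n : D (b *+ n) = D b *+ n.
  elim: n => [|n IH]; first by rewrite !mulr0n /D !scale0r T0 subrr.
  by rewrite !mulrS DD IH.
have Dle b : `|D b| <= K.
  have -> : D b = D (b - (Num.floor b)%:~R).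
    by rewrite -[RHS]addr0 -(Dz (Num.floor b)) -DD subrK.
  apply: (le_trans (DB _)).
  have K0 : 0 <= K by rewrite /K addr_ge0 // (le_trans _ (TB u)).
  rewrite -[leRHS]mulr1 ler_wpM2l // ger0_norm ?subr_ge0 ?floor_le //.
  have h := floorD1_gt b; rewrite intrD1 in h; lra.
have : `|D a| = 0.
  apply/eqP; rewrite eq_le normr_ge0 andbT; apply/negP => /negP; rewrite -ltNge => d0.
  have := Dle (a *+ (Num.truncn (K / `|D a|)).+1); rewrite Dn normrMn.
  apply/negP; rewrite -ltNge -mulr_natr mulrC -ltr_pdivrMr //.
  exact: truncnS_gt.
by move/eqP; rewrite normr_eq0 subr_eq0 => /eqP.
Qed.

Lemma supn_le (g : X -> Y) b : (forall x, `|g x| <= b) -> supn g <= b.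
Proof.
move=> H; apply: ge_sup; first by exists `|g 0|, 0.
by move=> r [x ->].
Qed.

Lemma bdd_lin_lip0 (T : X -> Y) : is_bdd_lin T -> is_lip0 T.
Proof.
move=> HT; split; first exact: lin0 (proj1 HT).
exists (opn T) => x y; rewrite -linB; first exact: opn_bound.
exact: (proj1 HT).
Qed.

Lemma lip0_comb (a : R) (f g : X -> Y) : is_lip0 f -> is_lip0 g ->
  is_lip0 (fun x => a *: f x + g x).
Proof.
move=> Hf Hg; split; first by rewrite (proj1 Hf) (proj1 Hg) scaler0 addr0.
exists (`|a| * lipn f + lipn g) => x y.
rewrite opprD addrACA -scalerBr mulrDl; apply: (le_trans (ler_normD _ _)).
apply: lerD; last exact: lipn_bound.
by rewrite normrZ -mulrA ler_wpM2l ?normr_ge0 ?lipn_bound.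
Qed.

Lemma opn_ge0 (T : X -> Y) : 0 <= opn T.
Proof. by apply: sup_ge0 => r [x [_ ->]]. Qed.
End Helpers.

Lemma id2 (V : zmodType) (a b p q : V) : (a - p) - (b - q) = (a - b) - (p - q).
Proof. by rewrite !opprD !opprK addrACA. Qed.
Lemma id1 (V : zmodType) (a b p q : V) : a - b = (a - p - (b - q)) + (p - q).
Proof. by rewrite id2 subrK. Qed.

Section Main.
Variable R : realType.
Variables X Y : normedModType R.

Lemma phi_bdd (f : X -> Y) z : is_lip0 f -> is_bdd (fun x => f (z + x) - f x).
Proof.
move=> Hf; exists (lipn f * `|z|) => x.
by rewrite (le_trans (lipn_bound Hf _ _)) // addrK.
Qed.

Lemma P_bound (M : (X -> Y) -> Y) (HM : gen_inv_mean M) (f : X -> Y) :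
  is_lip0 f -> forall z, `|PXY M f z| <= lipn f * `|z|.
Proof.
case: HM => _ Mn _ _ _ Hf z; rewrite /PXY.
apply: (le_trans (Mn _ (phi_bdd z Hf))); apply: supn_le => x.
by rewrite (le_trans (lipn_bound Hf _ _)) // addrK.
Qed.

Lemma P_add (M : (X -> Y) -> Y) (HM : gen_inv_mean M) (f : X -> Y) :
  is_lip0 f -> forall z w, PXY M f (z + w) = PXY M f z + PXY M f w.
Proof.
move=> Hf z w; case: (HM) => Ml _ _ Mi _; rewrite /PXY.
have -> : (fun x => f (z + w + x) - f x) =
  (fun x => 1 *: (fun x => f (z + x) - f x) (w + x) + (f (w + x) - f x)).
  by apply: funext => x /=; rewrite scale1r addrA addrA subrK.
rewrite Ml ?scale1r; last exact: phi_bdd.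
  by rewrite (Mi (fun x => f (z + x) - f x)) //; exact: phi_bdd.
have [k Hk] := phi_bdd z Hf; by exists k => x; exact: Hk.
Qed.

Lemma P_lin (M : (X -> Y) -> Y) (HM : gen_inv_mean M) (f : X -> Y) :
  is_lip0 f -> is_bdd_lin (PXY M f).
Proof.
move=> Hf; split; last by exists (lipn f); exact: P_bound.
apply: (@add_bdd_lin _ _ _ _ (lipn f)); first exact: P_add.
exact: P_bound.
Qed.

Lemma P_id (M : (X -> Y) -> Y) (HM : gen_inv_mean M) (T : X -> Y) :
  is_bdd_lin T -> PXY M T = T.
Proof.
case=> HT _; case: HM => _ _ _ _ Mc; apply: funext => z; rewrite /PXY.
have -> : (fun x => T (z + x) - T x) = (fun _ => T z).
  by apply: funext => x; have := HT 1 z x; rewrite !scale1r => ->; rewrite addrK.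
exact: Mc.
Qed.

Lemma P_comb (M : (X -> Y) -> Y) (HM : gen_inv_mean M) (a : R) (f g : X -> Y) :
  is_lip0 f -> is_lip0 g ->
  PXY M (fun x => a *: f x + g x) = (fun z => a *: PXY M f z + PXY M g z).
Proof.
move=> Hf Hg; case: (HM) => Ml _ _ _ _; apply: funext => z; rewrite /PXY.
have -> : (fun x => (a *: f (z + x) + g (z + x)) - (a *: f x + g x)) =
  (fun x => a *: (fun x => f (z + x) - f x) x + (g (z + x) - g x)).
  by apply: funext => x /=; rewrite scalerBr opprD addrACA.
by rewrite Ml //; exact: phi_bdd.
Qed.

End Main.

Theorem mainTheorem3 (R : realType) (X Y : completeNormedModType R)
    (M : (X -> Y) -> Y) :
  is_dual_space Y -> gen_inv_mean M ->
  (* the map f |-> (P f, f - P f) is well defined into L(X,Y) (+)_1 ker P *)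
  (forall f : X -> Y, is_lip0 f ->
     [/\ is_bdd_lin (PXY M f), is_lip0 (f \- PXY M f)
       & PXY M (f \- PXY M f) = (fun _ => 0)]) /\
  (* it is linear *)
  (forall (a : R) (f g : X -> Y), is_lip0 f -> is_lip0 g ->
     PXY M (fun x => a *: f x + g x) = (fun z => a *: PXY M f z + PXY M g z)) /\
  (* it is a bijection onto L(X,Y) (+)_1 ker P *)
  (forall (T g : X -> Y), is_bdd_lin T -> is_lip0 g -> PXY M g = (fun _ => 0) ->
     exists f : X -> Y, [/\ is_lip0 f, PXY M f = T & f \- PXY M f = g]) /\
  (forall f1 f2 : X -> Y, is_lip0 f1 -> is_lip0 f2 ->
     PXY M f1 = PXY M f2 -> f1 \- PXY M f1 = f2 \- PXY M f2 -> f1 = f2) /\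
  (* it and its inverse are bounded: ||(T,g)|| = ||T|| + Lip(g) *)
  (exists c C : R, [/\ 0 < c, 0 < C &
     forall f : X -> Y, is_lip0 f ->
       c * lipn f <= opn (PXY M f) + lipn (f \- PXY M f) <= C * lipn f]).
Proof.
move=> _ HM.
have hE (f : X -> Y) : (f \- PXY M f) = (fun x => (-1) *: PXY M f x + f x).
  by apply: funext => x /=; rewrite scaleN1r addrC.
have hL (f : X -> Y) : is_lip0 f -> is_lip0 (f \- PXY M f).
  move=> Hf; rewrite hE; apply: lip0_comb => //.
  exact/bdd_lin_lip0/(P_lin HM).
split.
  move=> f Hf; split; [exact: (P_lin HM) | exact: hL |].
  rewrite hE P_comb //; last exact/bdd_lin_lip0/(P_lin HM).
  rewrite (P_id HM (P_lin HM Hf)); apply: funext => z.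
  by rewrite scaleN1r addNr.
split; first by move=> a f g Hf Hg; exact: P_comb.
split.
  move=> T g HT Hg Pg; exists (fun x => 1 *: T x + g x).
  have HTl := bdd_lin_lip0 HT.
  have PE : PXY M (fun x => 1 *: T x + g x) = T.
    rewrite P_comb // (P_id HM HT) Pg; apply: funext => z.
    by rewrite scale1r addr0.
  split; first exact: lip0_comb.
    exact: PE.
  by rewrite PE; apply: funext => x /=; rewrite scale1r addrAC subrr add0r.
split.
  move=> f1 f2 _ _ E1 E2; apply: funext => x.
  have := f_equal (fun h => h x) E2; rewrite /= E1; exact: addIr.
exists 1, 3; split => // f Hf; rewrite mul1r.
have HP := P_lin HM Hf.
apply/andP; split.
  apply: lipn_le; first by rewrite addr_ge0 ?opn_ge0 ?lipn_ge0.
  move=> x y.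
  have -> : f x - f y = ((f \- PXY M f) x - (f \- PXY M f) y) + PXY M f (x - y).
    by rewrite (linB (proj1 HP)) /=; exact: id1.
  rewrite mulrDl; apply: (le_trans (ler_normD _ _)).
  rewrite addrC; apply: lerD; first exact: opn_bound.
  exact: lipn_bound (hL _ Hf) _ _.
have h1 : opn (PXY M f) <= lipn f.
  apply: opn_le => x x1; apply: (le_trans (P_bound HM Hf x)).
  by rewrite -[leRHS]mulr1 ler_wpM2l ?lipn_ge0.
have h2 : lipn (f \- PXY M f) <= lipn f *+ 2.
  apply: lipn_le; first by rewrite mulrn_wge0 ?lipn_ge0.
  move=> x y /=; rewrite id2 -(linB (proj1 HP)).
  apply: (le_trans (ler_normB _ _)); rewrite mulr2n mulrDl.
  apply: lerD; [exact: lipn_bound | exact: P_bound].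
have -> : (3 : R) * lipn f = lipn f + lipn f *+ 2.
  by rewrite mulr2n; lra.
exact: lerD.
Qed.
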